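(* Let $\Sigma$ be a finite alphabet. A regular language $L \subseteq \Sigma^*$ belongs to $\mathsf{F}(\mathcal{O}(1))$ if and only if $L$ is a finite Boolean combination of suffix testable languages and regular length languages.
   Context: A streaming algorithm over $\Sigma$ is a deterministic (possibly infinite-state) automaton with an injective encoding $\mathrm{enc}$ of its states into bit strings. Fix a symbol $a\in\Sigma$; for $w=a_1\cdots a_m$ and $n\ge0$, $\mathrm{last}_n(w)=a_{m-n+1}\cdots a_m$ if $n\le m$ and $a^{n-m}a_1\cdots a_m$ otherwise. A fixed-size sliding window algorithm for $L$ is a sequence $(\mathcal{A}_n)_{n\ge0}$ where $\mathcal{A}_n$ is a streaming algorithm accepting $\{w\in\Sigma^* : \mathrm{last}_n(w)\in L\}$; its space complexity at $n$ is the maximal encoding length of a state of $\mathcal{A}_n$. $\mathsf{F}(\mathcal{O}(1))$ is the class of languages having a fixed-size sliding window algorithm whose space complexity is bounded by a constant. $L$ is $k$-suffix testable if for all $x,y\in\Sigma^*$ and $z\in\Sigma^k$: $xz\in L\iff yz\in L$; suffix testable if $k$-suffix testable for some $k\ge0$. $L$ is a length language if for each $n$ either $\Sigma^n\subseteq L$ or $L\cap\Sigma^n=\emptyset$. *)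

(* Defs.v *)
From mathcomp Require Import all_boot.
Set Implicit Arguments. Unset Strict Implicit. Unset Printing Implicit Defensive.

Definition lang (Sigma : Type) := seq Sigma -> Prop.

Definition regular (Sigma : finType) (L : lang Sigma) : Prop :=
  exists (Q : finType) (q0 : Q) (delta : Q -> Sigma -> Q) (F : pred Q),
    forall w, L w <-> F (foldl delta q0 w).

(* Streaming algorithm: deterministic, possibly infinite-state automaton
   with an injective encoding of its states into bit strings. *)
Record streaming_alg (Sigma : Type) := StreamingAlg {
  sa_state : Type;
  sa_init : sa_state;
  sa_delta : sa_state -> Sigma -> sa_state;
  sa_final : sa_state -> bool;
  sa_enc : sa_state -> seq bool;
  sa_enc_inj : injective sa_enc }.
Arguments sa_init {Sigma} s.
Arguments sa_delta {Sigma} s _ _.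
Arguments sa_final {Sigma} s _.
Arguments sa_enc {Sigma} s _.

Definition sa_accepts (Sigma : Type) (A : streaming_alg Sigma) (w : seq Sigma) : Prop :=
  sa_final A (foldl (sa_delta A) (sa_init A) w).

Definition lastn (Sigma : Type) (a : Sigma) (n : nat) (w : seq Sigma) : seq Sigma :=
  if n <= size w then drop (size w - n) w else nseq (n - size w) a ++ w.

Definition sliding_window_alg (Sigma : Type) (a : Sigma) (L : lang Sigma)
    (A : nat -> streaming_alg Sigma) : Prop :=
  forall n w, sa_accepts (A n) w <-> L (lastn a n w).

Definition space_bounded_by (Sigma : Type) (A : nat -> streaming_alg Sigma) (c : nat) : Prop :=
  forall n (q : sa_state (A n)), size (sa_enc (A n) q) <= c.

Definition F_O1 (Sigma : Type) (a : Sigma) (L : lang Sigma) : Prop :=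
  exists A : nat -> streaming_alg Sigma,
    sliding_window_alg a L A /\ exists c, space_bounded_by A c.

Definition k_suffix_testable (Sigma : Type) (k : nat) (L : lang Sigma) : Prop :=
  forall x y z : seq Sigma, size z = k -> (L (x ++ z) <-> L (y ++ z)).

Definition suffix_testable (Sigma : Type) (L : lang Sigma) : Prop :=
  exists k, k_suffix_testable k L.

Definition length_lang (Sigma : Type) (L : lang Sigma) : Prop :=
  forall n, (forall w : seq Sigma, size w = n -> L w) \/
            (forall w : seq Sigma, size w = n -> ~ L w).

Inductive bool_comb (Sigma : Type) (P : lang Sigma -> Prop) : lang Sigma -> Prop :=
  | bc_atom L : P L -> bool_comb P L
  | bc_empty : bool_comb P (fun _ => False)
  | bc_full : bool_comb P (fun _ => True)
  | bc_compl L : bool_comb P L -> bool_comb P (fun w => ~ L w)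
  | bc_union L1 L2 : bool_comb P L1 -> bool_comb P L2 -> bool_comb P (fun w => L1 w \/ L2 w)
  | bc_inter L1 L2 : bool_comb P L1 -> bool_comb P L2 -> bool_comb P (fun w => L1 w /\ L2 w)
  | bc_ext L1 L2 : (forall w, L1 w <-> L2 w) -> bool_comb P L1 -> bool_comb P L2.

(* Main.v *)
Require Import Defs.
From mathcomp Require Import all_boot.
From mathcomp Require Import zify.
From Stdlib Require Import Classical ClassicalEpsilon.
Set Implicit Arguments. Unset Strict Implicit. Unset Printing Implicit Defensive.

Section Lastn.
Variables (S : Type) (a : S).

Lemma size_lastn n w : size (lastn a n w) = n.
Proof. rewrite /lastn; case: ifP => h; rewrite ?size_drop ?size_cat ?size_nseq; lia. Qed.

Lemma lastn_id w : lastn a (size w) w = w.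
Proof. by rewrite /lastn leqnn subnn drop0. Qed.

Lemma lastn_catr v r n : size r = n -> lastn a n (v ++ r) = r.
Proof.
move=> hr; rewrite /lastn size_cat hr leq_addl addnK.
exact: drop_size_cat.
Qed.

Lemma lastn_lastn n k w : n <= k -> lastn a n (lastn a k w) = lastn a n w.
Proof.
move=> hnk; rewrite {1}/lastn size_lastn hnk.
rewrite /lastn; case: (leqP k (size w)) => hk.
  rewrite drop_drop (_ : n <= size w) ?(leq_trans hnk hk) //; congr drop; lia.
rewrite drop_cat size_nseq; case: (leqP n (size w)) => hn.
  rewrite ltnNge (_ : k - size w <= k - n) /=; last lia.
  congr drop; lia.
rewrite (_ : k - n < k - size w); last lia.
by rewrite drop_nseq; congr (nseq _ _ ++ _); lia.
Qed.

Lemma lastn_cat n w s : size s <= n ->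
  lastn a n (w ++ s) = lastn a (n - size s) w ++ s.
Proof.
move=> hs; rewrite /lastn size_cat.
case: (leqP n (size w + size s)) => h.
  rewrite (_ : n - size s <= size w); last lia.
  rewrite drop_cat; case: ifP => h2.
    congr (drop _ _ ++ _); lia.
  rewrite (_ : size w + size s - n - size w = 0); last lia.
  by rewrite drop0 drop_oversize // ; lia.
rewrite (_ : n - size s <= size w = false); last lia.
rewrite -catA; congr (nseq _ _ ++ _); lia.
Qed.

Lemma lastn_cat_big n w s : n <= size s ->
  lastn a n (w ++ s) = lastn a n s.
Proof.
move=> hs; rewrite /lastn size_cat.
rewrite (_ : n <= size w + size s); last lia.
rewrite hs drop_cat ifN; last lia.
congr drop; lia.
Qed.

Lemma lastn_lastn_cat k w s : lastn a k (lastn a k w ++ s) = lastn a k (w ++ s).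
Proof.
case: (leqP (size s) k) => h.
  by rewrite !lastn_cat // lastn_lastn // leq_subr.
by rewrite !lastn_cat_big // ltnW.
Qed.
End Lastn.


Definition wlocal (S : Type) (a : S) (L : lang S) :=
  exists k, forall n w1 w2, lastn a k w1 = lastn a k w2 ->
    (L (lastn a n w1) <-> L (lastn a n w2)).

Lemma wlocal_mono (S : Type) (a : S) k K w1 w2 : k <= K ->
  lastn a K w1 = lastn a K w2 -> lastn a k w1 = lastn a k w2.
Proof. by move=> h e; rewrite -(lastn_lastn a w1 h) e lastn_lastn. Qed.


Lemma bc_wlocal (S : Type) (a : S) (P : lang S -> Prop) (L : lang S) :
  (forall K, P K -> suffix_testable K \/ length_lang K) ->
  bool_comb P L -> wlocal a L.
Proof.
move=> hP; elim=> {L}.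
- move=> L /hP [[k hk]|hl].
    exists k => n w1 w2 e.
    case: (leqP n k) => hn.
      by rewrite -(lastn_lastn a w1 hn) e lastn_lastn.
    have hn' := ltnW hn.
    rewrite -(cat_take_drop (n - k) (lastn a n w1)).
    rewrite -(cat_take_drop (n - k) (lastn a n w2)).
    have d1 : forall w, drop (n - k) (lastn a n w) = lastn a k w.
      move=> w; rewrite -(lastn_lastn a w hn') {2}/lastn size_lastn hn'.
      by [].
    rewrite !d1 e; apply: hk; exact: size_lastn.
  exists 0 => n w1 w2 _.
  case: (hl n) => h; split=> H.
  + by apply: h; rewrite size_lastn.
  + by apply: h; rewrite size_lastn.
  + by exfalso; apply: (h _ (size_lastn a n w1)).
  + by exfalso; apply: (h _ (size_lastn a n w2)).
- by exists 0.
- by exists 0.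
- move=> L _ [k hk]; exists k => n w1 w2 e.
  by have := hk n w1 w2 e; tauto.
- move=> L1 L2 _ [k1 h1] _ [k2 h2]; exists (maxn k1 k2) => n w1 w2 e.
  have e1 := wlocal_mono (leq_maxl k1 k2) e.
  have e2 := wlocal_mono (leq_maxr k1 k2) e.
  by have := h1 n _ _ e1; have := h2 n _ _ e2; tauto.
- move=> L1 L2 _ [k1 h1] _ [k2 h2]; exists (maxn k1 k2) => n w1 w2 e.
  have e1 := wlocal_mono (leq_maxl k1 k2) e.
  have e2 := wlocal_mono (leq_maxr k1 k2) e.
  by have := h1 n _ _ e1; have := h2 n _ _ e2; tauto.
- move=> L1 L2 h _ [k hk]; exists k => n w1 w2 e.
  by rewrite -!h; apply: hk.
Qed.

Section Auto.
Variables (Sigma : finType) (a : Sigma) (L : lang Sigma) (k n : nat).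
Let T := (k.-tuple Sigma)%type.
Definition sw_init : T := insubd [tuple of nseq k a] (lastn a k [::]).
Definition sw_delta (t : T) (x : Sigma) : T := insubd t (lastn a k (val t ++ [:: x])).
Definition sw_final (t : T) : bool :=
  if excluded_middle_informative (L (lastn a n (val t))) then true else false.
Definition sw_enc (t : T) : seq bool := nseq (enum_rank t) true.
Lemma sw_enc_inj : injective sw_enc.
Proof.
move=> t1 t2 /(congr1 size); rewrite !size_nseq => /val_inj.
exact: enum_rank_inj.
Qed.
Definition sw_alg : streaming_alg Sigma := StreamingAlg sw_init sw_delta sw_final sw_enc_inj.

Lemma sw_inv w : val (foldl sw_delta sw_init w) = lastn a k w.
Proof.
elim/last_ind: w => [|w x IH].
  by rewrite /= /sw_init insubdK // unfold_in /= size_lastn.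
rewrite foldl_rcons /sw_delta insubdK; last by rewrite unfold_in /= size_lastn.
by rewrite IH lastn_lastn_cat cats1.
Qed.

Lemma sw_bound (t : T) : size (sw_enc t) <= #|{: T}|.
Proof. by rewrite size_nseq ltnW. Qed.
End Auto.

Lemma wlocal_FO1 (Sigma : finType) (a : Sigma) (L : lang Sigma) :
  wlocal a L -> F_O1 a L.
Proof.
move=> [k hk]; exists (fun n => sw_alg a L k n); split.
  move=> n w; rewrite /sa_accepts /= /sw_final sw_inv.
  have e : L (lastn a n (lastn a k w)) <-> L (lastn a n w).
    by apply: hk; rewrite lastn_lastn.
  case: excluded_middle_informative => h; split=> //; first by rewrite -e.
  by rewrite -e.
exists #|{: (k.-tuple Sigma)}| => n q; exact: sw_bound.
Qed.


Lemma pigeon_list (T : eqType) (univ : seq T) (h : nat -> T) :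
  (forall t, h t \in univ) -> exists i j, i < j <= size univ /\ h i = h j.
Proof.
move=> hu; set es := [seq h t | t <- iota 0 (size univ).+1].
have : ~~ uniq es.
  apply/negP => U.
  have sub : {subset es <= univ} by move=> x /mapP [t _ ->].
  by have := uniq_leq_size U sub; rewrite size_map size_iota ltnn.
move/(uniqPn (h 0)) => [i [j [hij hj e]]].
move: hj e; rewrite size_map size_iota => hj.
rewrite !(nth_map 0) ?size_iota ?(ltn_trans hij) // !nth_iota ?(ltn_trans hij) //.
by move=> e; exists i, j; split => //; rewrite hij.
Qed.

Fixpoint bits (c : nat) : seq (seq bool) :=
  if c is c'.+1 then [::] :: (map (cons true) (bits c') ++ map (cons false) (bits c'))
  else [:: [::]].

Lemma mem_bits c s : size s <= c -> s \in bits c.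
Proof.
elim: c s => [|c IH] [|b s] //= hs.
rewrite in_cons mem_cat; apply/orP; right; apply/orP.
by case: b; [left|right]; apply: map_f; apply: IH.
Qed.

Lemma iter_per (S : Type) (enc : S -> seq bool) c :
  injective enc -> (forall s, size (enc s) <= c) ->
  forall (g : S -> S) x, iter (size (bits c)) g x = iter (size (bits c) + (size (bits c))`!) g x.
Proof.
move=> inj bnd g x.
have [i [j [hij e]]] := @pigeon_list _ (bits c) (fun t => enc (iter t g x)) (fun t => mem_bits (bnd _)).
move/inj: e => e; move/andP: hij => [hij hjK].
set K := size (bits c) in hjK *; clearbody K.
have hm : forall m, iter (m + j) g x = iter (m + i) g x.
  by move=> m; rewrite !iterD e.
have hr : forall r m, iter (m + i + r * (j - i)) g x = iter (m + i) g x.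
  elim=> [|r IH] m; first by rewrite mul0n addn0.
  rewrite (_ : m + i + r.+1 * (j - i) = (m + r * (j - i)) + j); last first.
    rewrite mulSn; lia.
  by rewrite hm (_ : m + r * (j - i) + i = m + i + r * (j - i)) ?IH //; lia.
have hd : (j - i) %| K`! by apply: dvdn_fact; apply/andP; split; lia.
have e2 : K + K`! = (K - i) + i + (K`! %/ (j-i)) * (j - i) by rewrite divnK //; lia.
rewrite e2 hr; congr iter; lia.
Qed.

Definition pw (S : Type) (Y : seq S) t := flatten (nseq t Y).

Lemma size_pw (S : Type) (Y : seq S) t : size (pw Y t) = t * size Y.
Proof. by elim: t => //= t IH; rewrite /pw /= size_cat -/(pw Y t) IH mulSn. Qed.

Lemma pwD (S : Type) (Y : seq S) m n : pw Y (m + n) = pw Y m ++ pw Y n.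
Proof. by elim: m => //= m IH; rewrite /pw /= -catA -!/(pw Y _) IH. Qed.

Lemma foldl_pw (S R : Type) (f : R -> S -> R) Y t s :
  foldl f s (pw Y t) = iter t (fun s => foldl f s Y) s.
Proof.
elim: t s => //= t IH s; rewrite /pw /= foldl_cat -/(pw Y t) IH.
by rewrite -iterSr.
Qed.

Section FwdB.
Variables (Sigma : Type) (a : Sigma) (L : lang Sigma) (A : nat -> streaming_alg Sigma) (c : nat).
Hypothesis hA : sliding_window_alg a L A.
Hypothesis hc : space_bounded_by A c.
Let K := size (bits c).

Lemma lemB v u Y c' : size v = K`! * size Y ->
  L (v ++ u ++ pw Y K ++ c') <-> L (u ++ pw Y (K + K`!) ++ c').
Proof.
move=> hv; set n := size (v ++ u ++ pw Y K ++ c').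
have e1 : L (v ++ u ++ pw Y K ++ c') <-> sa_accepts (A n) (v ++ u ++ pw Y K ++ c').
  by rewrite hA /n lastn_id.
have e2 : L (u ++ pw Y (K + K`!) ++ c') <-> sa_accepts (A n) (v ++ u ++ pw Y (K + K`!) ++ c').
  rewrite hA lastn_catr //.
  rewrite /n !size_cat !size_pw hv mulnDl; lia.
rewrite e1 e2 /sa_accepts !catA !foldl_cat !foldl_pw.
rewrite -(@iter_per _ (sa_enc (A n)) c (@sa_enc_inj _ (A n)) (hc (n:=n))).
by [].
Qed.

Lemma lemC x y s Y c' : size x = size y -> K`! * size Y <= size x + size s ->
  size x <= K`! * size Y ->
  L (x ++ s ++ pw Y K ++ c') <-> L (y ++ s ++ pw Y K ++ c').
Proof.
move=> hxy hs hx; set t := K`! * size Y - size x.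
have ht : t <= size s by rewrite /t; lia.
rewrite -(cat_take_drop t s) -!catA (catA x (take t s)) (catA y (take t s)).
rewrite lemB; last by rewrite size_cat size_takel // /t; lia.
rewrite lemB //; last by rewrite size_cat size_takel // /t; lia.
Qed.
End FwdB.

Lemma pw_mul (S : Type) (Z : seq S) h k : pw (pw Z h) k = pw Z (k * h).
Proof. elim: k => // k IH; rewrite mulSn pwD -IH. by []. Qed.

Section Main.
Variables (Sigma : finType) (a : Sigma) (L : lang Sigma).
Variables (Q : finType) (q0 : Q) (delta : Q -> Sigma -> Q) (F : pred Q).
Hypothesis hD : forall w, L w <-> F (foldl delta q0 w).
Variables (A : nat -> streaming_alg Sigma) (c : nat).
Hypothesis hA : sliding_window_alg a L A.
Hypothesis hc : space_bounded_by A c.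

Lemma pump r z1 z2 : foldl delta r (z1 ++ z2) = foldl delta r z1 ->
  forall t c', foldl delta r (z1 ++ pw z2 t ++ c') = foldl delta r (z1 ++ c').
Proof.
move=> e; elim=> // t IH c'.
by rewrite /pw /= -/(pw z2 t) -catA catA foldl_cat e -foldl_cat IH.
Qed.

Lemma main_prop x y z : size x = size y -> size z = #|{: Q * Q}| ->
  (L (x ++ z) <-> L (y ++ z)).
Proof.
move=> hxy hz.
set s := foldl delta q0 x; set s' := foldl delta q0 y.
have [i [j [hij e]]] := @pigeon_list _ (enum {: Q * Q})
   (fun i => (foldl delta s (take i z), foldl delta s' (take i z)))
   (fun t => mem_enum _ _).
move/andP: hij => [hij hj]; rewrite -cardE -hz in hj.
case: e => e1 e2.
set z1 := take i z; set z2 := drop i (take j z); set z3 := drop j z.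
have ez : z = z1 ++ z2 ++ z3.
  by rewrite catA /z1 /z2 -{1}(take_takel z (ltnW hij)) cat_take_drop cat_take_drop.
have ez12 : take j z = z1 ++ z2 by rewrite /z1 /z2 -{1}(take_takel z (ltnW hij)) cat_take_drop.
rewrite ez12 in e1 e2.
have hz2 : 0 < size z2 by rewrite /z2 size_drop size_takel //; lia.
set K := size (bits c).
set h := (size x).+1.
set R := K`! * h + K * h.
have key : forall u r, r = foldl delta q0 u -> foldl delta r (z1 ++ z2) = foldl delta r z1 ->
   L (u ++ z) <-> L (u ++ (z1 ++ pw z2 (K`! * h)) ++ pw (pw z2 h) K ++ z3).
  move=> u r hr er.
  have -> : u ++ (z1 ++ pw z2 (K`! * h)) ++ pw (pw z2 h) K ++ z3 = u ++ (z1 ++ pw z2 R ++ z3).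
    by rewrite /R pwD pw_mul !catA.
  rewrite !hD !(foldl_cat _ _ u) -hr (pump er) {1}ez.
  by rewrite catA (foldl_cat _ _ (z1 ++ z2)) er -foldl_cat.
rewrite (key x s) // (key y s') //.
apply: (lemC hA hc) => //.
- rewrite -/K size_cat !size_pw mulnA; lia.
- rewrite -/K size_pw.
  apply: (leq_trans (ltnW (ltnSn (size x)))).
  apply: (leq_trans _ (leq_pmull _ (fact_gt0 K))).
  exact: leq_pmulr.
Qed.
End Main.


Lemma bc_exists (S : Type) (T : eqType) (P : lang S -> Prop) (Q : T -> lang S) (s : seq T) :
  (forall t, bool_comb P (Q t)) ->
  bool_comb P (fun w => exists t, t \in s /\ Q t w).
Proof.
move=> hQ; elim: s => [|t s IH].
  apply: bc_ext (bc_empty P) => w; split => //; by case=> t [].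
apply: bc_ext (bc_union (hQ t) IH) => w; split.
  case=> [h|[t' [h1 h2]]]; first by exists t; rewrite mem_head.
  by exists t'; rewrite in_cons h1 orbT.
move=> [t' []]; rewrite in_cons => /orP [/eqP ->|h1 h2]; first by left.
by right; exists t'.
Qed.

Section Decomp.
Variables (Sigma : finType) (a : Sigma) (L : lang Sigma).
Variables (Q : finType) (q0 : Q) (delta : Q -> Sigma -> Q) (F : pred Q).
Hypothesis hD : forall w, L w <-> F (foldl delta q0 w).
Variable k : nat.
Hypothesis hk : forall x y z, size x = size y -> size z = k -> (L (x ++ z) <-> L (y ++ z)).

Lemma Lw w : L w <-> L (lastn a (size w) (lastn a k w)).
Proof.
case: (leqP (size w) k) => h.
  by rewrite lastn_lastn // lastn_id.
rewrite {1}/lastn size_lastn leqNgt h /=.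
rewrite -{1}(cat_take_drop (size w - k) w).
have -> : drop (size w - k) w = lastn a k w by rewrite /lastn ltnW.
apply: hk; last exact: size_lastn.
by rewrite size_nseq size_takel // leq_subr.
Qed.

Definition Gstep (p : 'I_k.+1 * Q) (x : Sigma) : 'I_k.+1 * Q :=
  if p.1 < k then (inord p.1.+1, p.2) else (p.1, delta p.2 a).

Lemma Ginv w : ((foldl Gstep (ord0, q0) w).1 : nat) = minn (size w) k /\
   (foldl Gstep (ord0, q0) w).2 = foldl delta q0 (nseq (size w - k) a).
Proof.
elim/last_ind: w => [|w x [IH1 IH2]].
  split; first by rewrite min0n.
  by rewrite sub0n.
rewrite foldl_rcons size_rcons /Gstep IH1; case: ifP => h /=.
  rewrite inordK; last by lia.
  rewrite IH2; split; first lia.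
  have -> : size w - k = 0 by lia.
  have -> : (size w).+1 - k = 0 by lia.
  by [].
rewrite IH1 IH2; split; first lia.
rewrite -foldl_rcons; congr foldl.
rewrite (_ : (size w).+1 - k = (size w - k).+1); last lia.
by elim: (size w - k) => //= m ->.
Qed.

Lemma G_regular (z : seq Sigma) : size z = k ->
  regular (fun w : seq Sigma => L (lastn a (size w) z)).
Proof.
move=> hz.
exists ('I_k.+1 * Q)%type, (ord0, q0), Gstep,
  (fun p : 'I_k.+1 * Q => F (foldl delta p.2 (drop (k - p.1) z))).
move=> w; rewrite hD; have [h1 h2] := Ginv w; rewrite h1 h2 -foldl_cat.
suff -> : lastn a (size w) z = nseq (size w - k) a ++ drop (k - minn (size w) k) z by [].
rewrite /lastn hz; case: leqP => h.
  by rewrite (_ : size w - k = 0) //; lia.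
by rewrite subnn drop0.
Qed.

Lemma decomp : bool_comb (fun K => suffix_testable K \/ (regular K /\ length_lang K)) L.
Proof.
pose Qt := fun (t : k.-tuple Sigma) (w : seq Sigma) =>
  lastn a k w = val t /\ L (lastn a (size w) (val t)).
have H := @bc_exists _ _ (fun K => suffix_testable K \/ (regular K /\ length_lang K))
  Qt (enum {: k.-tuple Sigma}).
apply: bc_ext (H _) => [w|t].
  split.
    by move=> [t [_ [e h]]]; rewrite Lw e.
  move=> h; have ht : size (lastn a k w) == k by rewrite size_lastn.
  exists (Tuple ht); rewrite mem_enum; split => //; split => //.
  by rewrite -Lw.
apply: bc_inter; apply: bc_atom.
  left; exists k => x y z hz; rewrite !lastn_catr //.
right; split; first exact: G_regular (size_tuple t).
move=> n; case: (classic (L (lastn a n t))) => h; [left|right] => w hw; rewrite hw //.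
Qed.
End Decomp.


Theorem theorem6p1 (Sigma : finType) (a : Sigma) (L : lang Sigma) :
  regular L ->
  (F_O1 a L <->
   bool_comb (fun K => suffix_testable K \/ (regular K /\ length_lang K)) L).
Proof.
move=> [Q [q0 [delta [F hD]]]]; split.
  move=> [A [hA [c hc]]].
  apply: (decomp a hD (k := #|{: Q * Q}|)).
  by move=> x y z; apply: (main_prop hD hA hc).
move=> hb; apply: wlocal_FO1.
apply: (bc_wlocal _ _ hb) => K [h|[_ h]]; [left|right] => //.
Qed.
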